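(* For $n\ge1$, $\left|\Pi_n\wr C_2(1^12^2,1^22^1)\right|=2^n+2(B(n)-1)$, where $B(n)$ is the $n$th Bell number.
   Context: For $n\ge0$ let $[n]=\{1,\dots,n\}$. A $2$-colored set partition of $[n]$ is a set partition of $[n]$ together with an assignment of a color from $\{1,2\}$ to each element; $\Pi_n\wr C_2$ is the set of these. For a set $S$ of patterns, $\Pi_n\wr C_2(S)$ is the set of such colored partitions avoiding every pattern in $S$ in the pattern sense. For the patterns used here: $\sigma$ contains $1^12^2$ iff there are $i<j$ in different blocks with $i$ colored $1$ and $j$ colored $2$; $\sigma$ contains $1^22^1$ iff there are $i<j$ in different blocks with $i$ colored $2$ and $j$ colored $1$. $B(n)$ is the number of set partitions of $[n]$. *)

(* Defs.v *)
From mathcomp Require Import all_boot.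
Set Implicit Arguments. Unset Strict Implicit. Unset Printing Implicit Defensive.

(* The ground set [n] = {1,...,n} is modelled by 'I_n = {0,...,n-1}
   (order-preserving shift by one). *)

Definition set_partitions (n : nat) :=
  [set P : {set {set 'I_n}} | partition P [set: 'I_n]].

Definition bell (n : nat) : nat := #|set_partitions n|.

(* Colors {1,2} are modelled by 'I_2: value 0 is color 1, value 1 is color 2. *)
Definition color1 : 'I_2 := ord0.
Definition color2 : 'I_2 := ord_max.

Definition colored_partitions (n : nat) :=
  [set Pc : {set {set 'I_n}} * {ffun 'I_n -> 'I_2} | Pc.1 \in set_partitions n].

(* sigma contains the pattern a^x b^y (with {a,b} = {1,2}, a<b in different
   blocks) iff there are i < j in different blocks with i colored x, j colored y. *)
Definition contains_12 (n : nat) (P : {set {set 'I_n}}) (c : {ffun 'I_n -> 'I_2})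
    (x y : 'I_2) : bool :=
  [exists i : 'I_n, exists j : 'I_n,
     [&& i < j, pblock P i != pblock P j, c i == x & c j == y]].

Definition contains_1122 n P c := @contains_12 n P c color1 color2.
Definition contains_1221 n P c := @contains_12 n P c color2 color1.

Definition avoiders (n : nat) :=
  [set Pc in colored_partitions n |
     ~~ contains_1122 Pc.1 Pc.2 && ~~ contains_1221 Pc.1 Pc.2].

(* Main.v *)
Require Import Defs.
From mathcomp Require Import all_boot.
Set Implicit Arguments. Unset Strict Implicit. Unset Printing Implicit Defensive.

Section S.
Variable n : nat.
Hypothesis hn : 1 <= n.

Definition P0 : {set {set 'I_n}} := [set [set: 'I_n]].

Lemma P0_part : P0 \in set_partitions n.
Proof.
rewrite inE /partition /P0 cover1 eqxx trivIset1 /= in_set1.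
apply/eqP => /setP /(_ (Ordinal hn)); by rewrite !inE.
Qed.

Lemma avoid_iff (P : {set {set 'I_n}}) (c : {ffun 'I_n -> 'I_2}) :
  (~~ contains_1122 P c && ~~ contains_1221 P c) =
  [forall i, forall j, (pblock P i != pblock P j) ==> (c i == c j)].
Proof.
apply/idP/idP.
- case/andP => /existsPn H1 /existsPn H2; apply/forallP => i; apply/forallP => j.
  apply/implyP => Hd.
  have key : forall a b : 'I_n, a < b -> pblock P a != pblock P b -> c a == c b.
    move=> a b ab dab.
    move: (H1 a) => /existsPn /(_ b); move: (H2 a) => /existsPn /(_ b).
    rewrite ab dab /= /color1 /color2.
    case: (c a) => [[|[|?]] ?] //; case: (c b) => [[|[|?]] ?] //.
  case: (ltngtP i j) => h.
  + exact: key.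
  + rewrite eq_sym; apply: key h _; by rewrite eq_sym.
  + have ij : i = j by apply: val_inj. by rewrite ij eqxx in Hd.
- move/forallP => H; apply/andP; split; apply/existsPn => i; apply/existsPn => j;
  apply/negP => /and4P [_ Hd /eqP ci /eqP cj];
  move: (H i) => /forallP /(_ j); rewrite Hd /= ci cj //.
Qed.

Lemma other_block (P : {set {set 'I_n}}) x :
  P \in set_partitions n -> P != P0 -> exists z, pblock P z != pblock P x.
Proof.
rewrite inE => /and3P [/eqP cov triv n0] neq.
case: (boolP [exists z, pblock P z != pblock P x]) => [/existsP //|/existsPn Hall].
have allB : forall z, pblock P z = pblock P x by move=> z; apply/eqP/negPn/Hall.
exfalso.
have Bin : pblock P x \in P by apply: pblock_mem; rewrite cov inE.
have BT : pblock P x = [set: 'I_n].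
  apply/setP => z; rewrite inE -(allB z) mem_pblock cov inE //.
case/negP: neq; apply/eqP/setP => D; rewrite /P0 in_set1.
apply/idP/idP.
- move=> DP; case: (set_0Vmem D) => [D0|[d dD]].
    by rewrite -D0 DP in n0.
  by rewrite -(def_pblock triv DP dD) allB BT.
- by move/eqP => ->; rewrite -BT.
Qed.

Lemma avoid_nonP0 (P : {set {set 'I_n}}) (c : {ffun 'I_n -> 'I_2}) :
  P \in set_partitions n -> P != P0 ->
  [forall i, forall j, (pblock P i != pblock P j) ==> (c i == c j)] =
  (c \in [set [ffun=> color1]; [ffun=> color2]]).
Proof.
move=> Pp neq; apply/idP/idP.
- move/forallP => H.
  have H' : forall i j, pblock P i != pblock P j -> c i = c j.
    by move=> i j d; move: (H i) => /forallP /(_ j); rewrite d => /eqP.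
  have cst : forall i, c i = c (Ordinal hn).
    move=> i; set x := Ordinal hn.
    case: (eqVneq (pblock P i) (pblock P x)) => e; last exact: H'.
    have [z hz] := other_block x Pp neq.
    rewrite (H' i z); last by rewrite e eq_sym.
    exact: H'.
  rewrite !inE; case e: (c (Ordinal hn)) => [[|[|k]] hk] //.
  + apply/orP; left; apply/eqP/ffunP => i; rewrite ffunE cst e; exact: val_inj.
  + apply/orP; right; apply/eqP/ffunP => i; rewrite ffunE cst e; exact: val_inj.
- rewrite !inE => Hc; apply/forallP => i; apply/forallP => j; apply/implyP => _.
  by case/orP: Hc => /eqP ->; rewrite !ffunE.
Qed.

Lemma avoid_P0 (c : {ffun 'I_n -> 'I_2}) :
  [forall i, forall j, (pblock P0 i != pblock P0 j) ==> (c i == c j)].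
Proof.
apply/forallP => i; apply/forallP => j.
have triv : trivIset P0 by apply: trivIset1.
have Tin : [set: 'I_n] \in P0 by rewrite in_set1.
by rewrite (def_pblock triv Tin (in_setT i)) (def_pblock triv Tin (in_setT j)) eqxx.
Qed.

End S.

Theorem mainTheorem6 (n : nat) : 1 <= n ->
  #|avoiders n| = 2 ^ n + 2 * (bell n - 1).
Proof.
move=> hn.
set A1 := [set (P0 n, c) | c : {ffun 'I_n -> 'I_2}].
set A2 := setX (set_partitions n :\ P0 n) [set [ffun=> color1]; [ffun=> color2] : {ffun 'I_n -> 'I_2}].
have E : avoiders n = A1 :|: A2.
  apply/setP => [[P c]]; rewrite /avoiders /colored_partitions !inE /= avoid_iff.
  case: (eqVneq P (P0 n)) => [->|neq].
  - rewrite avoid_P0 andbT.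
    have := P0_part hn; rewrite inE => ->; symmetry; apply/orP; left.
    by apply/imsetP; exists c.
  - have -> : ((P, c) \in A1) = false.
      by apply/negP => /imsetP [c' _ [e _]]; rewrite e eqxx in neq.
    rewrite /=.
    case Pp: (partition P [set: 'I_n]) => //=.
    have Pp' : P \in set_partitions n by rewrite inE.
    by rewrite (avoid_nonP0 hn c Pp' neq) !inE.
have D : A1 :&: A2 = set0.
  apply/setP => [[P c]]; rewrite !inE; apply/negP => /andP [/imsetP [c' _ [e _]]].
  by rewrite e /= eqxx.
rewrite E cardsU D cards0 subn0 card_imset; last by move=> x y [].
rewrite card_ffun card_ord cardsX cards2.
have -> : ([ffun=> color1] != [ffun=> color2] :> {ffun 'I_n -> 'I_2}).
  apply/negP => /eqP /ffunP /(_ (Ordinal hn)); rewrite !ffunE => /(congr1 val) //.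
rewrite /bell [#|set_partitions n|](cardsD1 (P0 n)) (P0_part hn) add1n subn1 /= card_ord mulnC.
by [].
Qed.
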